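(* Let $R$ be a Noetherian local ring, $I,J$ ideals of $R$ and $K\subseteq I$ an ideal. Let $\bar J=(J+K)/K$ and $\bar I=I/K$ in $R/K$. Then $\operatorname{ar}_{\bar J}(\bar I)\le\operatorname{ar}_J(I)$.
   Context: For ideals $\mathfrak a,\mathfrak b$ of a Noetherian local ring, $\operatorname{ar}_{\mathfrak b}(\mathfrak a)$ is the least $c$ such that $\mathfrak b^n\cap\mathfrak a=\mathfrak b^{n-c}(\mathfrak b^c\cap\mathfrak a)$ for all $n\ge c$. *)

(* Defs.v *)
From HB Require Import structures.
From mathcomp Require Import all_boot all_algebra.
Set Implicit Arguments. Unset Strict Implicit. Unset Printing Implicit Defensive.
Import GRing.Theory.
Local Open Scope ring_scope.

Definition is_ideal (R : comPzRingType) (a : R -> Prop) : Prop :=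
  a 0 /\ (forall x y, a x -> a y -> a (x + y)) /\ (forall r x, a x -> a (r * x)).

Definition seteq (R : Type) (a b : R -> Prop) : Prop := forall x, a x <-> b x.
Definition subs (R : Type) (a b : R -> Prop) : Prop := forall x, a x -> b x.

Definition idealI (R : Type) (a b : R -> Prop) : R -> Prop := fun x => a x /\ b x.
Definition idealD (R : comPzRingType) (a b : R -> Prop) : R -> Prop :=
  fun x => exists y z, a y /\ b z /\ x = y + z.
Definition idealM (R : comPzRingType) (a b : R -> Prop) : R -> Prop :=
  fun x => exists s : seq (R * R),
    (forall p, p \in s -> a p.1 /\ b p.2) /\ x = \sum_(p <- s) p.1 * p.2.

Fixpoint idealX (R : comPzRingType) (b : R -> Prop) (n : nat) : R -> Prop :=
  match n with
  | 0 => fun _ => True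
  | n'.+1 => idealM (idealX b n') b
  end.

Definition img (R S : Type) (f : R -> S) (a : R -> Prop) : S -> Prop :=
  fun y => exists x, a x /\ f x = y.

Definition ar_prop (R : comPzRingType) (b a : R -> Prop) (c : nat) : Prop :=
  forall n, (c <= n)%N ->
    seteq (idealI (idealX b n) a) (idealM (idealX b (n - c)) (idealI (idealX b c) a)).

Definition is_ar (R : comPzRingType) (b a : R -> Prop) (c : nat) : Prop :=
  ar_prop b a c /\ forall c', ar_prop b a c' -> (c <= c')%N.

Definition is_maximal (R : comPzRingType) (m : R -> Prop) : Prop :=
  is_ideal m /\ ~ m 1 /\
  forall a, is_ideal a -> subs m a -> ~ a 1 -> seteq a m.

Definition local_ring (R : comPzRingType) : Prop :=
  exists m : R -> Prop, is_maximal m /\ forall m', is_maximal m' -> seteq m' m.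

Definition noetherian (R : comPzRingType) : Prop :=
  forall ch : nat -> R -> Prop, (forall n, is_ideal (ch n)) ->
    (forall n, subs (ch n) (ch n.+1)) ->
    exists N, forall n, (N <= n)%N -> seteq (ch n) (ch N).

(* Main.v *)
Require Import Defs.
From HB Require Import structures.
From mathcomp Require Import all_boot all_algebra.
From Stdlib Require Import Classical.
Import GRing.Theory.
Set Implicit Arguments.
Local Open Scope ring_scope.

Section Aux.
Variables (R S : comPzRingType) (f : {rmorphism R -> S}).

Lemma idealM_mono (a a' b b' : R -> Prop) :
  subs a a' -> subs b b' -> subs (idealM a b) (idealM a' b').
Proof.
move=> Ha Hb x [s [Hs ->]]; exists s; split=> // p /Hs [h1 h2]; split; auto.
Qed.

Lemma idealM_mono_S (a a' b b' : S -> Prop) :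
  subs a a' -> subs b b' -> subs (idealM a b) (idealM a' b').
Proof.
move=> Ha Hb x [s [Hs ->]]; exists s; split=> // p /Hs [h1 h2]; split; auto.
Qed.

Lemma push (a b : R -> Prop) :
  subs (img f (idealM a b)) (idealM (img f a) (img f b)).
Proof.
move=> y [x [[s [Hs ->]] <-]].
exists (map (fun p => (f p.1, f p.2)) s); split.
  move=> p /mapP [q /Hs [h1 h2] ->] /=; split; [exists q.1 | exists q.2]; by [].
by rewrite big_map rmorph_sum; apply: eq_bigr => p _; rewrite rmorphM.
Qed.

Lemma lift (a b : R -> Prop) (a' b' : S -> Prop) :
  subs a' (img f a) -> subs b' (img f b) ->
  subs (idealM a' b') (img f (idealM a b)).
Proof.
move=> Ha Hb y [s [Hs ->]]; clear y.
elim: s Hs => [|p s IH] Hs.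
  exists 0; split; last by rewrite big_nil rmorph0.
  by exists [::]; rewrite big_nil.
have [h1 h2] := Hs p (mem_head _ _).
have [x1 [ax1 fx1]] := Ha _ h1.
have [x2 [bx2 fx2]] := Hb _ h2.
have [z [[t [Ht ez]] fz]] : img f (idealM a b) (\sum_(q <- s) q.1 * q.2).
  by apply: IH => q qs; apply: Hs; rewrite in_cons qs orbT.
exists (x1 * x2 + z); split.
  exists ((x1, x2) :: t); split.
    move=> q; rewrite in_cons => /orP [/eqP -> | qt] //; exact: Ht.
  by rewrite big_cons ez.
by rewrite big_cons rmorphD rmorphM fx1 fx2 fz.
Qed.

End Aux.
Unset Implicit Arguments.

Lemma min_exists (P : nat -> Prop) c : P c ->
  exists m, (P m /\ forall c', P c' -> (m <= c')%N) /\ (m <= c)%N.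
Proof.
elim: c {-2}c (leqnn c) => [|N IH] c Hc Pc.
  exists c; split=> //; split=> // c' _; by move: Hc; rewrite leqn0 => /eqP ->.
destruct (classic (exists d, (d < c)%N /\ P d)) as [[d [dc Pd]]|H].
  have [m [Hm md]] := IH d (leq_trans (leq_trans dc Hc) (leqnn _)) Pd.
  by exists m; split=> //; apply: leq_trans md (ltnW dc).
exists c; split=> //; split=> // c' Pc'.
rewrite leqNgt; apply/negP => lt; apply: H; by exists c'.
Qed.

Theorem lemma2p6 (R S : comPzRingType) (f : {rmorphism R -> S})
  (I J K : R -> Prop) :
  noetherian R -> local_ring R ->
  is_ideal I -> is_ideal J -> is_ideal K -> subs K I ->
  (forall y : S, exists x, f x = y) ->
  (forall x, f x = 0 <-> K x) ->
  forall c : nat, is_ar J I c ->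
  exists c' : nat, is_ar (img f (idealD J K)) (img f I) c' /\ (c' <= c)%N.
Proof.
move=> _ _ [I0 [ID IM]] [J0 [JD JM]] [K0 [KD KM]] KI surj ker c [Har _].
set Jb := img f (idealD J K); set Ib := img f I.
have JJb : subs (img f J) Jb.
  move=> y [x [Jx <-]]; exists x; split=> //; exists x, 0; split=> //; split=> //.
  by rewrite addr0.
have JbJ : subs Jb (img f J).
  move=> y [x [[j [k [Jj [Kk ->]]]] <-]]; exists j; split=> //.
  by rewrite rmorphD (proj2 (ker k) Kk) addr0.
have A : forall n, subs (img f (idealX J n)) (idealX Jb n).
  elim=> [|n IH] y //= Hy.
  exact: (idealM_mono_S IH JJb (push f Hy)).
have B : forall n, subs (idealX Jb n) (img f (idealX J n)).
  elim=> [|n IH] y //= Hy.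
    by have [x <-] := surj y; exists x.
  exact: (lift f IH JbJ).
have D : forall m, subs (idealI (idealX Jb m) Ib) (img f (idealI (idealX J m) I)).
  move=> m y [/B [x [Jx fx]] [i [Ii fi]]]; exists x; split=> //; split=> //.
  have Kxi : K (x - i) by apply/ker; rewrite rmorphB fx fi subrr.
  have -> : x = (x - i) + i by rewrite subrK.
  by apply: ID => //; apply: KI.
have E : forall m, subs (img f (idealI (idealX J m) I)) (idealI (idealX Jb m) Ib).
  move=> m y [x [[Jx Ix] <-]]; split; [apply: A; by exists x | by exists x].
have Pc : ar_prop Jb Ib c.
  move=> n cn y; split.
    move/D => [x [Hx <-]].
    have := (proj1 (Har n cn x) Hx) => Hx'.
    apply: (idealM_mono_S (@A (n - c)%N) (@E c)); apply: (push f); by exists x.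
  move=> Hy.
  have [x [Hx <-]] := lift f (@B (n - c)%N) (@D c) Hy.
  apply: E; exists x; split=> //; exact: (proj2 (Har n cn x) Hx).
have [m [Hm mc]] := @min_exists (ar_prop Jb Ib) c Pc.
by exists m.
Qed.
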